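(* For any refund schemes $(R_j)_{j\in P}$ satisfying Contribution Monotonicity, there exist instances of the combinatorial civic crowdfunding game $\mathcal{M}_{CC}$ and contributions of the agents in $N\setminus\{i'\}$ such that agent $i'$ has no optimal strategy, i.e., the supremum of agent $i'$'s total utility over its feasible contribution vectors (given the others' contributions) is not attained.
   Context: Combinatorial civic crowdfunding game $\mathcal{M}_{CC}$: projects $P=\{1,\dots,p\}$ with target costs $T_j>0$; agents $N=\{1,\dots,n\}$ with budgets $\gamma_i\ge0$ and valuations $\theta_{ij}\ge0$. Agent $i$ contributes $x_{ij}\in\mathbb{R}_+$ with $\sum_j x_{ij}\le\gamma_i$; $C_j=\sum_i x_{ij}$; project $j$ funded iff $C_j\ge T_j$. Anonymous refund scheme $R_j(B_j,x_{ij},C_j)\ge0$ with bonus $B_j>0$ gives refund $r_{ij}$, with $\sum_i r_{ij}=B_j$. Utility of $i$ from $j$: $\theta_{ij}-x_{ij}$ if $C_j\ge T_j$, $r_{ij}$ if $C_j<T_j$; total utility is the sum over projects. Contribution Monotonicity: $R_j$ differentiable and strictly increasing in the contribution. *)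

(* Defs.v *)
From Stdlib Require Import Reals List Arith.
From Coquelicot Require Import Coquelicot.
Import ListNotations.
Open Scope R_scope.

(* Agents are indexed 0..n-1, projects 0..p-1. *)

Definition rsum (n : nat) (f : nat -> R) : R :=
  fold_right Rplus 0 (map f (seq 0 n)).

(* An anonymous refund scheme Rj (B, x, C): nonnegative refunds, and the
   refunds of any finite set of agents with (positive) total contribution C
   add up to the bonus B. *)
Definition is_refund_scheme (Rj : R -> R -> R -> R) : Prop :=
  (forall B x C, 0 < B -> 0 <= x -> x <= C -> 0 <= Rj B x C) /\
  (forall (B : R) (n : nat) (x : nat -> R), 0 < B ->
     (forall i, (i < n)%nat -> 0 <= x i) -> 0 < rsum n x ->
     rsum n (fun i => Rj B (x i) (rsum n x)) = B).

Definition contribution_monotone (Rj : R -> R -> R -> R) : Prop :=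
  forall B C, 0 < B -> 0 < C ->
    (forall x, 0 <= x <= C -> ex_derive (fun y => Rj B y C) x) /\
    (forall x1 x2, 0 <= x1 -> x1 < x2 -> x2 <= C -> Rj B x1 C < Rj B x2 C).

(* total contribution C_j of profile x (x i j = contribution of agent i to project j) *)
Definition total_contrib (n : nat) (x : nat -> nat -> R) (j : nat) : R :=
  rsum n (fun i => x i j).

Definition utility (n p : nat) (T : nat -> R) (theta : nat -> nat -> R)
    (Rs : nat -> R -> R -> R -> R) (B : nat -> R) (x : nat -> nat -> R) (i : nat) : R :=
  rsum p (fun j =>
    if Rle_dec (T j) (total_contrib n x j)
    then theta i j - x i j
    else Rs j (B j) (x i j) (total_contrib n x j)).

Definition feasible (p : nat) (g : R) (y : nat -> R) : Prop :=
  (forall j, (j < p)%nat -> 0 <= y j) /\ rsum p y <= g.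

Definition update (x : nat -> nat -> R) (i : nat) (y : nat -> R) : nat -> nat -> R :=
  fun k j => if Nat.eqb k i then y j else x k j.

(* Main.v *)
Require Import Defs.
From Stdlib Require Import Reals Lra Lia.
From Coquelicot Require Import Coquelicot.
Open Scope R_scope.

Lemma grid (d : R) : 0 < d -> forall N x, 0 <= x < INR N * d ->
  exists k, (k < N)%nat /\ INR k * d <= x < INR (S k) * d.
Proof.
  intros Hd N; induction N as [|N IH]; intros x Hx.
  - simpl in Hx; lra.
  - destruct (Rlt_dec x (INR N * d)) as [h|h].
    + destruct (IH x (conj (proj1 Hx) h)) as [k [Hk1 Hk2]].
      exists k; split; [lia|exact Hk2].
    + exists N; split; [lia|lra].
Qed.

Lemma lin (Rj : R -> R -> R -> R) :
  is_refund_scheme Rj -> contribution_monotone Rj ->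
  forall B C x, 0 < B -> 0 < C -> 0 <= x <= C -> Rj B x C = B * x / C.
Proof.
  intros [H1 H2] M B C x HB HC Hx.
  set (g := fun y => Rj B y C).
  assert (gC : g C = B).
  { pose proof (H2 B 1%nat (fun _ => C) HB) as K.
    assert (E : rsum 1 (fun _ => C) = C) by (unfold rsum; simpl; ring).
    rewrite E in K. unfold rsum in K; simpl in K.
    unfold g. rewrite <- K at 2; [ring| intros; lra | lra]. }
  assert (add : forall a b, 0 <= a -> 0 <= b -> a + b <= C -> g a + g b = g (a+b)).
  { intros a b Ha Hb Hab.
    pose (xs := fun i : nat => match i with 0%nat => a | 1%nat => b | _ => C - a - b end).
    pose proof (H2 B 3%nat xs HB) as K.
    assert (E : rsum 3 xs = C) by (unfold rsum, xs; simpl; ring).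
    rewrite E in K.
    assert (K' : rsum 3 (fun i => Rj B (xs i) C) = B).
    { apply K. intros i Hi. unfold xs; destruct i as [|[|]]; lra. lra. }
    pose (ys := fun i : nat => match i with 0%nat => a + b | _ => C - a - b end).
    pose proof (H2 B 2%nat ys HB) as K2.
    assert (E2 : rsum 2 ys = C) by (unfold rsum, ys; simpl; ring).
    rewrite E2 in K2.
    assert (K2' : rsum 2 (fun i => Rj B (ys i) C) = B).
    { apply K2. intros i Hi. unfold ys; destruct i as [|]; lra. lra. }
    unfold rsum, xs, ys in *; simpl in *. unfold g. lra. }
  assert (g0 : g 0 = 0).
  { pose proof (add 0 0 (Rle_refl _) (Rle_refl _) ltac:(lra)) as K.
    rewrite Rplus_0_r in K. lra. }
  assert (mono : forall a b, 0 <= a -> a <= b -> b <= C -> g a <= g b).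
  { intros a b Ha Hab Hb. destruct (Rle_lt_or_eq_dec _ _ Hab) as [h|h].
    - left. apply (proj2 (M B C HB HC)); lra.
    - rewrite h; lra. }
  assert (case : x = C \/ x < C) by lra.
  destruct case as [->|Hlt].
  { fold (g C); rewrite gC; field; lra. }
  fold (g x).
  assert (bnd : forall m : nat, (0 < m)%nat -> Rabs (g x - B * x / C) <= B / INR m).
  { intros m Hm.
    assert (Hmr : 0 < INR m) by (apply lt_0_INR; lia).
    set (d := C / INR m).
    assert (Hd : 0 < d) by (unfold d; apply Rdiv_lt_0_compat; lra).
    assert (Hmd : INR m * d = C) by (unfold d; field; lra).
    assert (mul : forall k, (k <= m)%nat -> g (INR k * d) = INR k * g d).
    { induction k as [|k IH]; intros Hk.
      - simpl. rewrite !Rmult_0_l; exact g0.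
      - rewrite S_INR. assert (Hk' : (k <= m)%nat) by lia.
        assert (HkR : INR (S k) <= INR m) by (apply le_INR; lia).
        rewrite S_INR in HkR.
        assert (0 <= INR k) by apply pos_INR.
        replace ((INR k + 1) * d) with (INR k * d + d) by ring.
        assert (0 <= INR k * d) by (apply Rmult_le_pos; lra).
        assert (INR k * d + d <= C).
        { rewrite <- Hmd. replace (INR k * d + d) with ((INR k + 1) * d) by ring.
          apply Rmult_le_compat_r; lra. }
        rewrite <- add; [rewrite IH by exact Hk'; ring | lra | lra | lra]. }
    assert (gd : g d = B / INR m).
    { pose proof (mul m (le_n _)) as K. rewrite Hmd, gC in K.
      rewrite K. field; lra. }
    assert (Hxl : x < INR m * d) by (rewrite Hmd; lra).
    destruct (grid d Hd m x (conj (proj1 Hx) Hxl)) as [k [Hk [Hk1 Hk2]]].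
    rewrite S_INR in Hk2.
    assert (HkR : INR (S k) <= INR m) by (apply le_INR; lia).
    rewrite S_INR in HkR.
    assert (0 <= INR k) by apply pos_INR.
    assert (lo : g (INR k * d) <= g x) by (apply mono; nra).
    assert (hi : g x <= g ((INR k + 1) * d)).
    { apply mono; nra. }
    rewrite mul in lo by lia.
    replace (INR k + 1) with (INR (S k)) in hi by (rewrite S_INR; ring).
    rewrite mul in hi by lia. rewrite S_INR in hi.
    rewrite gd in lo, hi.
    assert (ex : B * x / C = B / INR m * (x / d)).
    { unfold d; field; lra. }
    assert (q1 : INR k <= x / d).
    { apply (Rmult_le_reg_r d); [lra|]. unfold Rdiv; rewrite Rmult_assoc, Rinv_l; lra. }
    assert (q2 : x / d <= INR k + 1).
    { apply (Rmult_le_reg_r d); [lra|]. unfold Rdiv; rewrite Rmult_assoc, Rinv_l; lra. }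
    assert (HBm : 0 < B / INR m) by (apply Rdiv_lt_0_compat; lra).
    rewrite ex. apply Rabs_le. split; nra. }
  destruct (Req_dec (g x) (B * x / C)) as [e|ne]; [exact e|exfalso].
  assert (Hpos : 0 < Rabs (g x - B * x / C)) by (apply Rabs_pos_lt; lra).
  destruct (archimed_cor1 (Rabs (g x - B * x / C) / B)) as [m [Hm1 Hm2]].
  { apply Rdiv_lt_0_compat; lra. }
  pose proof (bnd m Hm2) as K.
  assert (Hmr : 0 < INR m) by (apply lt_0_INR; lia).
  assert (B / INR m < Rabs (g x - B * x / C)).
  { replace (B / INR m) with (B * / INR m) by reflexivity.
    apply (Rmult_lt_compat_l B) in Hm1; [|lra].
    replace (B * (Rabs (g x - B * x / C) / B)) with (Rabs (g x - B * x / C)) in Hm1 by (field; lra).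
    exact Hm1. }
  lra.
Qed.

Theorem theorem5 :
  forall Rs : nat -> R -> R -> R -> R,
    (forall j, is_refund_scheme (Rs j) /\ contribution_monotone (Rs j)) ->
    exists (n p : nat) (T gamma : nat -> R) (theta : nat -> nat -> R) (B : nat -> R)
           (i' : nat) (x : nat -> nat -> R),
      (i' < n)%nat /\
      (forall j, (j < p)%nat -> 0 < T j) /\
      (forall i, (i < n)%nat -> 0 <= gamma i) /\
      (forall i j, (i < n)%nat -> (j < p)%nat -> 0 <= theta i j) /\
      (forall j, (j < p)%nat -> 0 < B j) /\
      (forall i, (i < n)%nat -> i <> i' -> feasible p (gamma i) (x i)) /\
      ~ (exists y, feasible p (gamma i') y /\
           forall y', feasible p (gamma i') y' ->
             utility n p T theta Rs B (update x i' y') i'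
             <= utility n p T theta Rs B (update x i' y) i').
Proof.
  intros Rs HRs.
  destruct (HRs 0%nat) as [HR HM].
  exists 2%nat, 1%nat, (fun _ => 2), (fun _ => 1), (fun _ _ => 0), (fun _ => 1), 0%nat,
    (fun _ _ => 1).
  split; [lia|]. split; [intros; lra|]. split; [intros; lra|].
  split; [intros; lra|]. split; [intros; lra|].
  split.
  { intros i Hi Hne. split; [intros; lra|]. unfold rsum; simpl; lra. }
  assert (U : forall y : nat -> R, 0 <= y 0%nat -> y 0%nat <= 1 ->
     utility 2 1 (fun _ => 2) (fun _ _ => 0) Rs (fun _ => 1) (update (fun _ _ => 1) 0 y) 0
     = if Rle_dec 2 (y 0%nat + 1) then - y 0%nat else y 0%nat / (y 0%nat + 1)).
  { intros y h0 h1. unfold utility, total_contrib, update, rsum; simpl.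
    replace (y 0%nat + (1 + 0)) with (y 0%nat + 1) by ring.
    destruct (Rle_dec 2 (y 0%nat + 1)).
    - ring.
    - rewrite (lin _ HR HM 1 (y 0%nat + 1) (y 0%nat)); [field|..]; lra. }
  intros [y [[Hy1 Hy2] Hopt]].
  assert (h0 : 0 <= y 0%nat) by (apply Hy1; lia).
  assert (h1 : y 0%nat <= 1) by (unfold rsum in Hy2; simpl in Hy2; lra).
  assert (feas : forall z, 0 <= z <= 1 -> feasible 1 1 (fun _ => z)).
  { intros z hz. split; [intros; lra|]. unfold rsum; simpl; lra. }
  destruct (Rle_dec 2 (y 0%nat + 1)) as [e|e].
  - pose proof (Hopt (fun _ => 0) (feas 0 ltac:(lra))) as K.
    rewrite (U y h0 h1), (U (fun _ => 0)) in K by lra.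
    destruct (Rle_dec 2 (y 0%nat + 1)); [|contradiction].
    destruct (Rle_dec 2 (0 + 1)); [lra|].
    replace (0 / (0 + 1)) with 0 in K by field. lra.
  - set (z := (y 0%nat + 1) / 2).
    assert (hz : y 0%nat < z < 1) by (unfold z; lra).
    pose proof (Hopt (fun _ => z) (feas z ltac:(lra))) as K.
    rewrite (U y h0 h1), (U (fun _ => z)) in K by lra.
    destruct (Rle_dec 2 (y 0%nat + 1)); [contradiction|].
    destruct (Rle_dec 2 (z + 1)); [lra|].
    assert (y 0%nat / (y 0%nat + 1) = 1 - / (y 0%nat + 1)) as E1 by (field; lra).
    assert (z / (z + 1) = 1 - / (z + 1)) as E2 by (field; lra).
    assert (/ (z + 1) < / (y 0%nat + 1)) by (apply Rinv_lt_contravar; nra).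
    lra.
Qed.
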